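(* For any contraction $C\in M_n(\mathbb{C})$, the following are equivalent: (i) every level $T_j$ ($j\ge0$) of the partial isometry tower of $C$ has the Circularity property; (ii) $C$ has defect-pencil Circularity.
   Context: For $X\in M_n(\mathbb{C})$, $H_X(\theta):=\frac12(e^{-i\theta}X+e^{i\theta}X^* )$. $X$ has the Circularity property if the spectrum of $H_X(\theta)$ is independent of $\theta\in\mathbb{R}$. A contraction is a matrix with $\|C\|\le1$. A contraction $C$ has defect-pencil Circularity if for every real $\tau$ the spectrum of $H_C(\theta)+\tau(I-C^*C)$ is independent of $\theta$. For a contraction $C$: $D_C=I-C^*C$, $d=\operatorname{rank}D_C$, $B_C$ is a $d\times n$ matrix of full row rank with $B_C^*B_C=D_C$ (matrix of $D_C^{1/2}$ on $\operatorname{Im}D_C$, zero on its complement), $\mathcal{A}(C)=\begin{bmatrix}0&B_C\\0&C\end{bmatrix}$, and the partial isometry tower is $T_0=C$, $T_{j+1}=\mathcal{A}(T_j)$. *)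

(* Defs.v *)
From mathcomp Require Import all_boot all_algebra.
From mathcomp Require Import reals trigo.
From mathcomp.real_closed Require Import complex.
Set Implicit Arguments. Unset Strict Implicit. Unset Printing Implicit Defensive.
Import GRing.Theory Num.Theory.
Local Open Scope ring_scope.

Section Defs.
Variable R : realType.
Local Notation C := (R[i]).

Definition adjmx m p (X : 'M[C]_(m, p)) : 'M[C]_(p, m) := (map_mx Num.conj X)^T.

Definition expi (t : R) : C := (Complex (cos t) (sin t)).

Definition Hmx m (X : 'M[C]_m) (t : R) : 'M[C]_m :=
  2^-1 *: (expi (- t) *: X + expi t *: adjmx X).

Definition spectrum m (X : 'M[C]_m) : C -> bool := fun a => eigenvalue X a.

Definition circular m (X : 'M[C]_m) : Prop :=
  forall t1 t2 : R, spectrum (Hmx X t1) =1 spectrum (Hmx X t2).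

(* contraction: ||C|| <= 1, i.e. ||C v||^2 <= ||v||^2 for every vector v *)
Definition contraction m (X : 'M[C]_m) : Prop :=
  forall v : 'cV[C]_m,
    (adjmx (X *m v) *m (X *m v)) 0 0 <= (adjmx v *m v) 0 0.

Definition defect m (X : 'M[C]_m) : 'M[C]_m := 1%:M - adjmx X *m X.

Definition defect_pencil_circular m (X : 'M[C]_m) : Prop :=
  forall tau : R, forall t1 t2 : R,
    spectrum (Hmx X t1 + (tau%:C)%C *: defect X)
    =1 spectrum (Hmx X t2 + (tau%:C)%C *: defect X).

Definition sqmx := {m : nat & 'M[C]_m}.

Definition tower_step (X Y : sqmx) : Prop :=
  exists B : 'M[C]_(\rank (defect (projT2 X)), projT1 X),
    [/\ adjmx B *m B = defect (projT2 X),
        row_free B &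
        Y = existT _ _ (block_mx 0 B 0 (projT2 X))].

Definition is_tower m (X : 'M[C]_m) (T : nat -> sqmx) : Prop :=
  T 0%N = existT _ m X /\ forall j, tower_step (T j) (T j.+1).

End Defs.

(* Main.v *)
Require Import Defs.
From mathcomp Require Import all_boot all_order all_algebra.
From mathcomp Require Import reals trigo ring lra.
From mathcomp Require Import spectral sesquilinear.
From mathcomp.real_closed Require Import complex.
From Stdlib Require Import Classical ClassicalEpsilon.
Set Implicit Arguments. Unset Strict Implicit. Unset Printing Implicit Defensive.
Import Order.TTheory GRing.Theory Num.Theory.
Local Open Scope ring_scope.

Section Basic.
Variable R : realType.
Local Notation C := (R[i]).

Lemma adjmxK m p (A : 'M[C]_(m,p)) : adjmx (adjmx A) = A.
Proof. by apply/matrixP=> i j; rewrite !mxE conjCK. Qed.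

Lemma adjmxM m p q (A : 'M[C]_(m,p)) (B : 'M[C]_(p,q)) :
  adjmx (A *m B) = adjmx B *m adjmx A.
Proof.
apply/matrixP=> i j; rewrite !mxE rmorph_sum; apply: eq_bigr=> k _.
by rewrite !mxE rmorphM mulrC.
Qed.

Lemma adjmxD m p (A B : 'M[C]_(m,p)) : adjmx (A + B) = adjmx A + adjmx B.
Proof. by apply/matrixP=> i j; rewrite !mxE rmorphD. Qed.

Lemma adjmxN m p (A : 'M[C]_(m,p)) : adjmx (- A) = - adjmx A.
Proof. by apply/matrixP=> i j; rewrite !mxE rmorphN. Qed.

Lemma adjmxZ m p a (A : 'M[C]_(m,p)) : adjmx (a *: A) = a^* *: adjmx A.
Proof. by apply/matrixP=> i j; rewrite !mxE rmorphM. Qed.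

Lemma adjmx0 m p : adjmx (0 : 'M[C]_(m,p)) = 0.
Proof. by apply/matrixP=> i j; rewrite !mxE rmorph0. Qed.

Lemma adjmx_scalar m a : adjmx (a%:M : 'M[C]_m) = a^*%:M.
Proof. by apply/matrixP=> i j; rewrite !mxE rmorphMn eq_sym. Qed.

Lemma adjmx_block m1 m2 n1 n2 (A : 'M[C]_(m1,n1)) (B : 'M[C]_(m1,n2))
  (Cc : 'M[C]_(m2,n1)) (D : 'M[C]_(m2,n2)) :
  adjmx (block_mx A B Cc D) = block_mx (adjmx A) (adjmx Cc) (adjmx B) (adjmx D).
Proof. by rewrite /adjmx map_block_mx tr_block_mx. Qed.

Lemma expiN (t : R) : expi (- t) = (expi t)^*.
Proof. by rewrite /expi cosN sinN. Qed.

Lemma expiNK (t : R) : expi (- t) * expi t = 1.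
Proof.
rewrite /expi cosN sinN; apply/eqP; rewrite eq_complex /= ; apply/andP; split;
  apply/eqP.
  by rewrite mulNr opprK -!expr2 cos2Dsin2.
by rewrite mulNr mulrC subrr.
Qed.

Lemma char_polyE m (A : 'M[C]_m) x : (char_poly A).[x] = \det (x%:M - A).
Proof.
rewrite /char_poly -horner_evalE -det_map_mx; congr (\det _).
apply/matrixP=> i j; by rewrite !mxE /= horner_evalE hornerD hornerN hornerMn hornerX hornerC.
Qed.

End Basic.

Section Step.
Variable R : realType.
Local Notation C := (R[i]).
Variables (d m : nat) (X : 'M[C]_m) (B : 'M[C]_(d, m)).
Hypothesis hB : adjmx B *m B = defect X.
Let Y := block_mx 0 B 0 X : 'M[C]_(d + m).

Lemma defect_step : defect Y = block_mx 1%:M 0 0 0.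
Proof.
rewrite /defect /Y adjmx_block !adjmx0 mulmx_block !mul0mx !mulmx0 !addr0.
rewrite hB /defect subrK (scalar_mx_block d m) opp_block_mx add_block_mx.
by rewrite !oppr0 !addr0 subrr.
Qed.

Lemma Hmx_step (t : R) : Hmx Y t =
  block_mx 0 ((2^-1 * expi (- t)) *: B) ((2^-1 * expi t) *: adjmx B) (Hmx X t).
Proof.
rewrite /Hmx /Y adjmx_block !adjmx0 !scale_block_mx add_block_mx scale_block_mx.
by rewrite !scaler0 addr0 add0r addr0 scaler0 !scalerA.
Qed.

Lemma det_step (t : R) (l s : C) : l - s != 0 ->
  \det (l%:M - (Hmx Y t + s *: defect Y)) =
  (l - s) ^+ d * \det (l%:M - (Hmx X t + (4 * (l - s))^-1 *: defect X)).
Proof.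
move=> hc; set c := l - s.
set a := 2^-1 * expi (- t); set b := 2^-1 * expi t.
rewrite Hmx_step defect_step scale_block_mx (scalar_mx_block d m) !scaler0.
rewrite add_block_mx !addr0 add0r -/a -/b opp_block_mx add_block_mx !add0r.
have -> : l%:M - s *: (1%:M : 'M[C]_d) = c%:M.
  by rewrite scalemx1 /c raddfB.
pose L : 'M[C]_(m, d) := (- b / c) *: adjmx B.
pose S : 'M[C]_m := l%:M - Hmx X t - (a * b / c) *: (adjmx B *m B).
have -> : block_mx c%:M (- (a *: B)) (- (b *: adjmx B)) (l%:M - Hmx X t) =
  block_mx 1%:M 0 L 1%:M *m block_mx c%:M (- (a *: B)) 0 S.
  rewrite mulmx_block !mul1mx !mul0mx !addr0.
  congr block_mx.
  - by rewrite /L mul_mx_scalar scalerA mulrC divfK // scaleNr.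
  - rewrite /S /L mulmxN -scalemxAl -scalemxAr scalerA.
    have -> : - b / c * a = - (a * b / c) by ring.
    by rewrite scaleNr opprK [RHS]addrC subrK.
rewrite det_mulmx det_lblock det_ublock !det_scalar expr1n mul1r.
rewrite expr1n mul1r; congr (_ * \det _).
rewrite /S hB opprD addrA.
have -> : a * b / c = (4 * c)^-1 => //.
rewrite /a /b mulrACA expiNK mulr1 invfM; congr (_ * _).
by rewrite -invfM -natrM.
Qed.

End Step.

Lemma poly_eq_many (F : idomainType) (p q : {poly F}) :
  (forall L : nat, exists s : seq F,
     [/\ uniq s, (L <= size s)%N & forall x, x \in s -> p.[x] = q.[x]]) ->
  p = q.
Proof.
move=> H; apply/eqP; rewrite -subr_eq0; apply/negP => /negP hpq.
have [s [us ls hs]] := H (size (p - q)).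
have : all (root (p - q)) s.
  by apply/allP => x xs; rewrite rootE hornerD hornerN hs // subrr.
move/(max_poly_roots hpq)/(_ us); rewrite ltnNge ls //.
Qed.

Lemma pigeon_inf (T : finType) (f : nat -> T) :
  exists t, forall N, exists k, (N <= k)%N /\ f k = t.
Proof.
apply: NNPP => H.
have H' : forall t, exists N, forall k, (N <= k)%N -> f k <> t.
  move=> t; apply: NNPP => Ht; apply: H; exists t => N.
  apply: NNPP => HN; apply: Ht; exists N => k hk ek; apply: HN; by exists k.
have [g hg] := fin_all_exists H'.
pose k := (\max_t g t)%N.
by apply: (hg (f k) k) => //; apply: leq_bigmax.
Qed.

Lemma many_in_fiber (T : eqType) (f : nat -> T) (t : T) :
  (forall N, exists k, (N <= k)%N /\ f k = t) ->
  forall L, exists s : seq nat, [/\ uniq s, size s = L & forall k, k \in s -> f k = t].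
Proof.
move=> H; elim=> [|L [s [us ss hs]]]; first by exists [::].
have [k [hk fk]] := H (\max_(i <- s) i).+1.
exists (k :: s); split => //=.
- rewrite us andbT; apply/negP => ks.
  have : (k <= \max_(i <- s) i)%N by apply: leq_bigmax_seq.

  by rewrite leqNgt hk.
- by rewrite ss.
- by move=> j; rewrite inE => /orP[/eqP ->|]; [| apply: hs].
Qed.

Section BL.
Variable R : realType.
Local Notation C := (R[i]).

Lemma expi_neq0 (t : R) : expi t != 0.
Proof. by apply/negP => /eqP h; have := expiNK t; rewrite h mulr0 => /eqP; rewrite eq_sym oner_eq0. Qed.

Lemma expiNV (t : R) : expi (- t) = (expi t)^-1.
Proof. by apply: (mulIf (expi_neq0 t)); rewrite expiNK mulVf // expi_neq0. Qed.

Definition theta (k : nat) : R := pi / (k.+1)%:R.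

Lemma theta_itv k : theta k \in `[0, pi].
Proof.
rewrite in_itv /= /theta; apply/andP; split.
  by rewrite divr_ge0 // ltW // pi_gt0.
rewrite ler_pdivrMr ?ltr0Sn // ler_peMr ?(ltW (pi_gt0 R)) //.
by rewrite ler1n.
Qed.

Lemma expi_theta_inj : injective (fun k => expi (theta k)).
Proof.
move=> j k /= h.
have hc : cos (theta j) = cos (theta k) by case: h.
have := congr1 acos hc; rewrite !cosK ?theta_itv // /theta => e.
have : ((j.+1)%:R^-1 : R) = (k.+1)%:R^-1.
  by apply: (mulfI (lt0r_neq0 (pi_gt0 R))).
by move/invr_inj/eqP; rewrite eqr_nat => /eqP [].
Qed.


Section BLmain.
Variables (m : nat) (X K : 'M[C]_m).
Let M (t : R) := Hmx X t + K.
Hypothesis hS : forall t1 t2, spectrum (M t1) =1 spectrum (M t2).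

Variable rr : R -> seq C.
Hypothesis rrE : forall t, char_poly (M t) = \prod_(z <- rr t) ('X - z%:P).

Lemma size_rr t : size (rr t) = m.
Proof. have := size_char_poly (M t); rewrite rrE size_prod_XsubC; by case. Qed.

Lemma rr_sub t z : z \in rr t -> z \in rr 0.
Proof.
move=> h.
have h1 : root (char_poly (M t)) z by rewrite rrE root_prod_XsubC.
have h2 : spectrum (M t) z by rewrite /spectrum eigenvalue_root_char.
have h3 : spectrum (M 0) z by rewrite (hS 0 t).
move: h3; rewrite /spectrum eigenvalue_root_char rrE root_prod_XsubC //.
Qed.

Let L := size (rr 0).
Let code t : {ffun 'I_m -> 'I_L.+1} :=
  [ffun i : 'I_m => inord (index (nth 0 (rr t) i) (rr 0))].

Lemma code_inj t1 t2 : code t1 = code t2 -> char_poly (M t1) = char_poly (M t2).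
Proof.
move=> h; rewrite (rrE t1) (rrE t2).
suff e : rr t1 = rr t2 by rewrite e.
apply: (@eq_from_nth _ 0); first by rewrite !size_rr.
move=> i; rewrite size_rr => hi.
have := congr1 (fun f : {ffun 'I_m -> 'I_L.+1} => nth 0 (rr 0) (val (f (Ordinal hi)))) h.
rewrite /code /= !ffunE !inordK ?ltnS ?index_size // !nth_index //.
  by apply: (@rr_sub t2); apply: mem_nth; rewrite size_rr.
by apply: (@rr_sub t1); apply: mem_nth; rewrite size_rr.
Qed.

Definition Nx (x : C) : 'M[{poly C}]_m := \matrix_(i, j)
  ((x *+ (i == j)) *: 'X - (2^-1 * X i j)%:P - (2^-1 * adjmx X i j) *: 'X^2
   - K i j *: 'X).

Lemma Nx_eval x t :
  (\det (Nx x)).[expi t] = (expi t)^+m * (char_poly (M t)).[x].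
Proof.
rewrite char_polyE -detZ -horner_evalE -det_map_mx; congr (\det _).
apply/matrixP => i j; rewrite !mxE /= horner_evalE !(hornerD, hornerN, hornerZ, hornerX, hornerC, hornerXn) expiNV.
set z := expi t; set e := x *+ _; set a := X i j; set b := adjmx X i j.
have hz : z != 0 by apply: expi_neq0.
by field.
Qed.

Lemma BL_main t1 t2 : char_poly (M t1) = char_poly (M t2).
Proof.
have [c hc] := pigeon_inf (fun k => code (theta k)).
have [k0 [_ hk0]] := hc 0%N.
pose P := char_poly (M (theta k0)).
have hfib k : code (theta k) = c -> char_poly (M (theta k)) = P.
  (move=> hk; apply: code_inj; rewrite hk hk0; done).
clearbody P.
have hx x : \det (Nx x) = 'X^m * (P.[x])%:P.
  apply: poly_eq_many => Ln.
  have [s [us ss hs]] := many_in_fiber hc Ln.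
  exists [seq expi (theta k) | k <- s]; split.
  - by rewrite map_inj_uniq //; exact: expi_theta_inj.
  - by rewrite size_map ss.
  move=> z /mapP [k ks ->].
  rewrite Nx_eval (hfib k (hs k ks)).
  (rewrite hornerM hornerXn hornerC; done).
have hall t : char_poly (M t) = P.
  apply: poly_eq_many => Ln.
  exists [seq (k%:R : C) | k <- iota 0 Ln]; split.
  - rewrite map_inj_uniq ?iota_uniq //.
    (move=> a b /eqP; rewrite eqr_nat => /eqP; done).
  - by rewrite size_map size_iota.
  move=> x _; apply: (mulfI (expf_neq0 m (expi_neq0 t))).
  (rewrite -Nx_eval (hx x) hornerM hornerXn hornerC; done).
exact: (etrans (hall t1) (esym (hall t2))).
Qed.
End BLmain.

Lemma BL m (X K : 'M[C]_m) :
  (forall t1 t2, spectrum (Hmx X t1 + K) =1 spectrum (Hmx X t2 + K)) ->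
  forall t1 t2, char_poly (Hmx X t1 + K) = char_poly (Hmx X t2 + K).
Proof.
move=> hS.
have hr t : exists r : seq C, char_poly (Hmx X t + K) == \prod_(z <- r) ('X - z%:P).
  case: (closed_field_poly_normal (char_poly (Hmx X t + K))) => r e.
  by exists r; rewrite [X in X == _]e (monicP (char_poly_monic _)) scale1r.
have [rr hrr] : exists rr : R -> seq C, forall t,
    char_poly (Hmx X t + K) = \prod_(z <- rr t) ('X - z%:P).
  exists (fun t => xchoose (hr t)) => t; exact/eqP/(xchooseP (hr t)).
exact: (@BL_main m X K hS rr hrr).
Qed.
End BL.

Section Good.
Variable R : realType.
Local Notation C := (R[i]).

Lemma poly_eq_nat (p q : {poly C}) (a : C) :
  (forall k : nat, p.[a + (k.+1)%:R] = q.[a + (k.+1)%:R]) -> p = q.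
Proof.
move=> H; apply: poly_eq_many => L.
exists [seq a + (k.+1)%:R | k <- iota 0 L]; split.
- rewrite map_inj_uniq ?iota_uniq //.
  by move=> i j /addrI /eqP; rewrite eqr_nat => /eqP [].
- by rewrite size_map size_iota.
- by move=> x /mapP [k _ ->].
Qed.

Lemma pencil_eval m (A B : 'M[C]_m) (s : C) :
  (\det (map_mx polyC A - 'X *: map_mx polyC B)).[s] = \det (A - s *: B).
Proof.
rewrite -horner_evalE -det_map_mx; congr (\det _).
apply/matrixP => i j; rewrite !mxE /= horner_evalE.
by rewrite hornerD hornerN hornerM hornerX !hornerC mulrC.
Qed.

Definition good m (X : 'M[C]_m) : Prop :=
  forall (s : C) (t1 t2 : R),
    char_poly (Hmx X t1 + s *: defect X) = char_poly (Hmx X t2 + s *: defect X).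

Lemma good_circular m (X : 'M[C]_m) : good X -> circular X.
Proof.
move=> g t1 t2 x; rewrite /spectrum !eigenvalue_root_char.
have := g 0 t1 t2.
rewrite !scale0r.
rewrite !addr0.
move=> ->.
done.
Qed.

Lemma good_step d m (X : 'M[C]_m) (B : 'M[C]_(d, m)) :
  adjmx B *m B = defect X -> good X -> good (block_mx 0 B 0 X).
Proof.
move=> hB g s t1 t2; apply: (poly_eq_nat (a := s)) => k.
set l := s + (k.+1)%:R.
have hc : l - s != 0 by rewrite /l addrC addKr pnatr_eq0.
have E t : (char_poly (Hmx (block_mx 0 B 0 X) t + s *: defect (block_mx 0 B 0 X))).[l]
  = (l - s) ^+ d * (char_poly (Hmx X t + (4 * (l - s))^-1 *: defect X)).[l].
  by rewrite char_polyE det_step // char_polyE.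
rewrite [LHS]E [RHS]E.
exact: (congr1 (fun p => (l - s) ^+ d * p.[l]) (g _ t1 t2)).
Qed.

Lemma pencil_good m (X : 'M[C]_m) : defect_pencil_circular X -> good X.
Proof.
move=> hP s t1 t2.
have hR (tau : R) := BL (hP tau).
apply: (poly_eq_nat (a := 0)) => k; set l : C := 0 + _.
pose P t := \det (map_mx polyC (l%:M - Hmx X t) - 'X *: map_mx polyC (defect X)).
have F t (z : C) : (char_poly (Hmx X t + z *: defect X)).[l] = (P t).[z].
  by rewrite pencil_eval char_polyE opprD addrA.
rewrite [LHS]F [RHS]F.
suff -> : P t1 = P t2 by [].
apply: (poly_eq_nat (a := 0)) => j.
rewrite -[LHS]F -[RHS]F add0r.
have -> : ((j.+1)%:R : C) = (((j.+1)%:R : R)%:C)%C by rewrite rmorph_nat.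
exact: (congr1 (fun p => p.[l]) (hR _ t1 t2)).
Qed.

End Good.

Section Iter.
Variable R : realType.
Variable l : R.
Hypothesis hl : 1 <= l.

Definition fit (tau : R) : R := (4 * (l - tau))^-1.

Lemma fit_pos tau : tau <= 2^-1 -> 0 < 4 * (l - tau).
Proof. move=> h; have : 2^-1 < 1 :> R by rewrite invf_lt1 ?ltr1n.
move=> h2; have hl2 := hl. lra. Qed.

Lemma fit_range tau : 0 <= tau <= 2^-1 -> 0 <= fit tau <= 2^-1.
Proof.
move=> /andP [h0 h1]; have hp := fit_pos h1.
rewrite /fit invr_ge0 (ltW hp) /=.
have h2 : 0 < (2 : R) by [].
rewrite lef_pV2 ?posrE //.
have : 2^-1 < 1 :> R by rewrite invf_lt1 ?ltr1n.
move=> h3; have hl2 := hl; lra.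
Qed.

Lemma fit_lt a b : a < b -> b <= 2^-1 -> fit a < fit b.
Proof.
move=> hab hb; have hpb := fit_pos hb.
have hlt : 4 * (l - b) < 4 * (l - a) by rewrite ltr_pM2l // ltrD2l ltrN2.
have hpa : 0 < 4 * (l - a) := lt_trans hpb hlt.
by rewrite /fit ltf_pV2 ?posrE.
Qed.

Definition git j := iter j fit 0.

Lemma git_range j : 0 <= git j <= 2^-1.
Proof.
elim: j => [|j IH] /=; first by rewrite lexx /= invr_ge0 ler0n.
exact: fit_range.
Qed.

Lemma git_step j : git j < git j.+1.
Proof.
elim: j => [|j IH].
  rewrite /git /= /fit invr_gt0; apply: fit_pos.
  by rewrite invr_ge0 ler0n.
rewrite /git iterS [X in _ < X]iterS; apply: fit_lt => //.
by have /andP[] := git_range j.+1.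
Qed.

Lemma git_inj : injective git.
Proof.
have mono j k : (j < k)%N -> git j < git k.
  elim: k => // k IH; rewrite ltnS leq_eqVlt => /orP [/eqP ->|hjk].
    exact: git_step.
  exact: lt_trans (IH hjk) (git_step k).
move=> j k e; case: (ltngtP j k) => // h.
  by have := mono _ _ h; rewrite e ltxx.
by have := mono _ _ h; rewrite e ltxx.
Qed.

End Iter.

Section Dirs.
Variable R : realType.
Local Notation C := (R[i]).

Lemma BL0 m (X : 'M[C]_m) :
  circular X -> forall t1 t2, char_poly (Hmx X t1) = char_poly (Hmx X t2).
Proof.
move=> h t1 t2.
have Sp0 (Y : 'M[C]_m) : spectrum (Y + 0) =1 spectrum Y.
  by move=> x; rewrite addr0.
have e := @BL R m X 0 (fun a b x => etrans (Sp0 _ x) (etrans (h a b x) (esym (Sp0 _ x)))) t1 t2.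
exact: (etrans (congr1 char_poly (esym (addr0 _))) (etrans e (congr1 char_poly (addr0 _)))).
Qed.

Lemma dir2 n (X : 'M[C]_n) : defect_pencil_circular X ->
  forall T : nat -> sqmx R, is_tower X T -> forall j, circular (projT2 (T j)).
Proof.
move=> hP T [h0 hs] j; apply: good_circular.
elim: j => [|j IH]; first by rewrite h0 /=; exact: pencil_good.
have [B [hB _ ->]] := hs j; exact: good_step.
Qed.


Lemma dir1_core n (X : 'M[C]_n) (T : nat -> sqmx R) :
  is_tower X T -> (forall j, circular (projT2 (T j))) -> defect_pencil_circular X.
Proof.
move=> [h0 hs] hc.
have hT j := BL0 (hc j).
have Q (l : R) (hl : 1 <= l) j : forall tau : R, 0 <= tau <= 2^-1 ->
    exists2 c : C, c != 0 & forall t,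
    (char_poly (Hmx (projT2 (T j)) t + (tau%:C)%C *: defect (projT2 (T j)))).[(l%:C)%C]
    = c * (char_poly (Hmx X t + ((iter j (fit l) tau)%:C)%C *: defect X)).[(l%:C)%C].
  elim: j => [|j IH].
    rewrite h0 /= => tau _; exists 1; first exact: oner_neq0.
    by move=> t; rewrite mul1r.
  have [B [hB _ e]] := hs j; rewrite e /= => tau htau.
  have [c hc0 hcE] := IH (fit l tau) (fit_range hl htau).
  have hpos : 0 < 4 * (l - tau) by apply: fit_pos => //; case/andP: htau.
  have hne : (l%:C)%C - (tau%:C)%C != 0.
    rewrite -rmorphB /= -(rmorph0 (real_complex R)) (inj_eq (@complexI R)).
    by apply/eqP => h; move: hpos; rewrite h mulr0 ltxx.
  exists (((l%:C)%C - (tau%:C)%C) ^+ \rank (defect (projT2 (T j))) * c).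
    by rewrite mulf_neq0 // expf_neq0.
  move=> t; rewrite char_polyE det_step // -char_polyE.
  have -> : (4 * ((l%:C)%C - (tau%:C)%C))^-1 = ((fit l tau)%:C)%C.
    by rewrite /fit fmorphV rmorphM rmorphB rmorph_nat.
  have ej : iter j (fit l) (fit l tau) = fit l (iter j (fit l) tau).
    by rewrite -iterSr.
  by rewrite hcE ej mulrA.
have key (l : R) (hl : 1 <= l) j t1 t2 :
  (char_poly (Hmx X t1 + ((git l j)%:C)%C *: defect X)).[(l%:C)%C] =
  (char_poly (Hmx X t2 + ((git l j)%:C)%C *: defect X)).[(l%:C)%C].
  have [c hc0 hcE] := Q l hl j 0 (git_range hl 0).
  apply: (mulfI hc0); rewrite -[LHS]hcE -[RHS]hcE.
  have E t : (char_poly (Hmx (projT2 (T j)) t + ((0:R)%:C)%C *: defect (projT2 (T j)))).[(l%:C)%C]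
     = (char_poly (Hmx (projT2 (T j)) t)).[(l%:C)%C].
    by rewrite rmorph0 scale0r addr0.
  rewrite [LHS]E [RHS]E.
  exact: (congr1 (fun p => p.[(l%:C)%C]) (hT j t1 t2)).
move=> tau t1 t2 x; rewrite /spectrum !eigenvalue_root_char.
suff -> : char_poly (Hmx X t1 + (tau%:C)%C *: defect X) =
          char_poly (Hmx X t2 + (tau%:C)%C *: defect X) by [].
apply: (poly_eq_nat (a := 0)) => k.
have hl : 1 <= ((k.+1)%:R : R) by rewrite ler1n.
have -> : 0 + (k.+1)%:R = ((((k.+1)%:R : R))%:C)%C by rewrite add0r rmorph_nat.
set l := ((k.+1)%:R : R).
pose P t := \det (map_mx polyC ((l%:C)%C%:M - Hmx X t) - 'X *: map_mx polyC (defect X)).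
have F t (z : C) : (char_poly (Hmx X t + z *: defect X)).[(l%:C)%C] = (P t).[z].
  by rewrite pencil_eval char_polyE opprD addrA.
rewrite [LHS]F [RHS]F.
suff -> : P t1 = P t2 by [].
apply: poly_eq_many => L.
exists [seq ((git l j)%:C)%C | j <- iota 0 L]; split.
- rewrite map_inj_uniq ?iota_uniq //.
  by move=> a b /complexI /(git_inj hl).
- by rewrite size_map size_iota.
move=> z /mapP [j _ ->].
rewrite -[LHS]F -[RHS]F; exact: key.
Qed.

End Dirs.

Section Psd.
Variable R : realType.
Local Notation C := (R[i]).

Lemma adj_tC m p (A : 'M[C]_(m, p)) : adjmx A = (A ^t* )%sesqui.
Proof. by rewrite /adjmx map_trmx. Qed.

Lemma contraction_psd m (X : 'M[C]_m) :
  contraction X <-> forall v : 'cV[C]_m, 0 <= (adjmx v *m defect X *m v) 0 0.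
Proof.
have E v : adjmx v *m defect X *m v = adjmx v *m v - adjmx (X *m v) *m (X *m v).
  by rewrite /defect mulmxBr mulmxBl mulmx1 adjmxM !mulmxA.
have E' v : (adjmx v *m defect X *m v) 0 0 =
    (adjmx v *m v) 0 0 - (adjmx (X *m v) *m (X *m v)) 0 0.
  by rewrite E [LHS]mxE [X in _ + X = _]mxE.
by split=> h v; move: (h v); rewrite E' subr_ge0.
Qed.

Lemma adjmx_col m1 m2 n (A : 'M[C]_(m1, n)) (B : 'M[C]_(m2, n)) :
  adjmx (col_mx A B) = row_mx (adjmx A) (adjmx B).
Proof. by rewrite /adjmx map_col_mx tr_col_mx. Qed.

Lemma norm2_ge0 m (v : 'cV[C]_m) : 0 <= (adjmx v *m v) 0 0.
Proof.
rewrite !mxE; apply: sumr_ge0 => i _; rewrite !mxE mulrC; exact: mul_conjC_ge0.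
Qed.

Lemma contraction_step d m (X : 'M[C]_m) (B : 'M[C]_(d, m)) :
  adjmx B *m B = defect X -> contraction (block_mx 0 B 0 X).
Proof.
move=> hB; apply/contraction_psd => v.
rewrite defect_step // -[v]vsubmxK adjmx_col mul_row_block !mulmx0 !addr0.
by rewrite mulmx1 mul_row_col mul0mx addr0; apply: norm2_ge0.
Qed.

End Psd.

Section ExB.
Variable R : realType.
Local Notation C := (R[i]).
Variables (m : nat) (X : 'M[C]_m).
Hypothesis hX : contraction X.
Let D := defect X.

Lemma adjD : adjmx D = D.
Proof. by rewrite /D /defect adjmxD adjmxN adjmx_scalar conjC1 adjmxM adjmxK. Qed.

Lemma D_normal : D \is normalmx.
Proof. by apply/normalmxP; rewrite -adj_tC adjD. Qed.

Let P := spectralmx D.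
Let x := spectral_diag D.
Let P' := adjmx P.

Lemma PP' : P *m P' = 1%:M.
Proof. by rewrite /P' adj_tC; apply/unitarymxP/spectral_unitarymx. Qed.

Lemma P'P : P' *m P = 1%:M.
Proof.
rewrite /P' adj_tC -invmx_unitary ?spectral_unitarymx //.
by rewrite mulVmx // spectral_unit.
Qed.

Lemma D_eq : D = P' *m diag_mx x *m P.
Proof.
by rewrite /P' adj_tC -invmx_unitary ?spectral_unitarymx //; apply/orthomx_spectralP/D_normal.
Qed.

Lemma diag_eq : diag_mx x = P *m D *m P'.
Proof. by rewrite D_eq !mulmxA PP' mul1mx -mulmxA PP' mulmx1. Qed.

Lemma x_ge0 i : 0 <= x 0 i.
Proof.
have := (contraction_psd X).1 hX (adjmx (row i P)).
rewrite adjmxK -row_mul.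
have -> : (row i (P *m D) *m adjmx (row i P)) 0 0 = (P *m D *m P') i i.
  by rewrite !mxE; apply: eq_bigr => k _; rewrite !mxE.
by rewrite -diag_eq mxE eqxx mulr1n.
Qed.


Lemma diag_mul (a b : 'rV[C]_m) :
  diag_mx a *m diag_mx b = diag_mx (\row_i (a 0 i * b 0 i)).
Proof. by apply/matrixP => i j; rewrite mul_diag_mx !mxE mulrnAr. Qed.

Lemma adj_diag (a : 'rV[C]_m) : adjmx (diag_mx a) = diag_mx (\row_i (a 0 i)^*).
Proof.
apply/matrixP => i j; rewrite !mxE rmorphMn eq_sym.
by case: eqP => [->|] //.
Qed.

Lemma sandwich (A B : 'M[C]_m) : P' *m A *m P *m (P' *m B *m P) = P' *m (A *m B) *m P.
Proof. by rewrite -!mulmxA (mulmxA P) PP' mul1mx !mulmxA. Qed.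

Let sq := \row_i sqrtC (x 0 i).
Let sqp := \row_i (if x 0 i == 0 then 0 else (sqrtC (x 0 i))^-1).
Let Q := P' *m diag_mx sq *m P.
Let Qp := P' *m diag_mx sqp *m P.

Lemma Q_adj : adjmx Q = Q.
Proof.
rewrite /Q !adjmxM adjmxK -/P' adj_diag mulmxA; congr (_ *m diag_mx _ *m _).
by apply/rowP => i; rewrite !mxE geC0_conj // sqrtC_ge0 x_ge0.
Qed.

Lemma QQ : Q *m Q = D.
Proof.
rewrite /Q sandwich diag_mul D_eq; congr (_ *m diag_mx _ *m _).
by apply/rowP => i; rewrite !mxE -expr2 sqrtCK.
Qed.

Lemma QpD : Qp *m D = Q.
Proof.
rewrite /Qp D_eq sandwich diag_mul; congr (_ *m diag_mx _ *m _).
apply/rowP => i; rewrite !mxE; case: eqP => [->|h]; first by rewrite mul0r sqrtC0.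
have hs : sqrtC (x 0 i) != 0 by rewrite sqrtC_eq0; apply/eqP.
by rewrite -[X in _ * X]sqrtCK expr2 mulrA mulVf // mul1r.
Qed.


Let W := schmidt (row_base D).

Lemma WW : W *m adjmx W = 1%:M.
Proof. by rewrite adj_tC; apply/unitarymxP/schmidt_unitarymx/rank_leq_col. Qed.

Lemma DW : D *m adjmx W *m W = D.
Proof.
have gen k (A : 'M[C]_(k, m)) : (A <= W)%MS -> A *m adjmx W *m W = A.
  move=> sub; have e := mulmxKpV sub; move: e.
  move: (A *m pinvmx W) => Y <-.
  by rewrite -(mulmxA Y W (adjmx W)) WW mulmx1.
apply: gen.
by rewrite /W eqmx_schmidt_free ?row_base_free // eq_row_base.
Qed.

Lemma QW : Q *m adjmx W *m W = Q.
Proof. by rewrite -QpD -!mulmxA (mulmxA D) DW. Qed.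

Lemma WQ : adjmx W *m W *m Q = Q.
Proof.
have := congr1 (@adjmx R _ _) QW.
rewrite (adjmxM (Q *m adjmx W) W) (adjmxM Q (adjmx W)) adjmxK Q_adj mulmxA => ->.
by [].
Qed.

Lemma exB0 : exists B : 'M[C]_(\rank D, m), adjmx B *m B = D /\ row_free B.
Proof.
exists (W *m Q); split.
  by rewrite adjmxM Q_adj -mulmxA (mulmxA _ W) WQ QQ.
rewrite /row_free eqn_leq rank_leq_row /=.
apply: (leq_trans _ (mxrankM_maxr (adjmx W) (W *m Q))).
rewrite mulmxA WQ -{1}QQ; exact: mxrankM_maxr.
Qed.

End ExB.

Lemma exB (R : realType) m (X : 'M[R[i]]_m) : contraction X ->
  exists B : 'M[R[i]]_(\rank (defect X), m), adjmx B *m B = defect X /\ row_free B.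
Proof. exact: exB0. Qed.

Section Tower.
Variable R : realType.
Local Notation C := (R[i]).

Definition nextB (Y : sqmx R) : 'M[C]_(\rank (defect (projT2 Y)), projT1 Y) :=
  match excluded_middle_informative
    (exists B : 'M[C]_(\rank (defect (projT2 Y)), projT1 Y),
       adjmx B *m B = defect (projT2 Y) /\ row_free B) with
  | left h => proj1_sig (constructive_indefinite_description _ h)
  | right _ => 0
  end.

Lemma nextB_spec (Y : sqmx R) : contraction (projT2 Y) ->
  adjmx (nextB Y) *m nextB Y = defect (projT2 Y) /\ row_free (nextB Y).
Proof.
move=> hY; rewrite /nextB; case: excluded_middle_informative => [h|h].
  by case: constructive_indefinite_description.
by case: h; apply: exB.
Qed.

Definition nextT (Y : sqmx R) : sqmx R :=
  existT _ _ (block_mx 0 (nextB Y) 0 (projT2 Y)).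

Definition towerT n (X : 'M[C]_n) (j : nat) : sqmx R := iter j nextT (existT _ n X).

Lemma towerT_contr n (X : 'M[C]_n) : contraction X -> forall j, contraction (projT2 (towerT X j)).
Proof.
move=> hX; elim=> [|j IH] //=.
by have [hB _] := nextB_spec IH; exact: contraction_step hB.
Qed.

Lemma towerT_ok n (X : 'M[C]_n) : contraction X -> is_tower X (towerT X).
Proof.
move=> hX; split => // j.
have hc : contraction (projT2 (towerT X j)) by apply: towerT_contr.
have [hB hf] := nextB_spec hc.
by exists (nextB (towerT X j)); split.
Qed.

End Tower.

Theorem mainTheorem4 (R : realType) (n : nat) (X : 'M[R[i]]_n) :
  contraction X ->
  ((forall T : nat -> sqmx R, is_tower X T -> forall j : nat, circular (projT2 (T j)))
   <-> defect_pencil_circular X).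
Proof.
move=> hX; split.
  move=> H; apply: (dir1_core (towerT_ok hX)) => j; apply: H; exact: towerT_ok.
by move=> hP T hT j; exact: (dir2 hP hT)...
Qed.
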